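(* The following two statements are equivalent: (1) For every prime $p>2$, the graph $\mathcal{G}_p^\times$ is connected and is equivalent to the graph $\mathcal{G}^\times$ with triples congruent modulo $p$ identified. (2) For every prime $p>2$, the canonical reduction map $\mathcal{M} \to \mathcal{M}_p$, $(a,b,c) \mapsto (a \bmod p, b \bmod p, c \bmod p)$, is onto.
   Context: $\mathcal{M}$ is the set of triples $(a,b,c)$ of nonnegative integers with $a^2+b^2+c^2 - abc = 0$, and $\mathcal{M}^\times = \mathcal{M}\setminus\{(0,0,0)\}$. For a prime $p > 2$, $\mathcal{M}_p$ is the set of $(x,y,z) \in (\mathbb{Z}/p\mathbb{Z})^3$ with $x^2+y^2+z^2-xyz \equiv 0 \pmod p$ and $\mathcal{M}_p^\times = \mathcal{M}_p \setminus\{(0,0,0)\}$. The Vieta involutions are $V_1(a,b,c) = (bc-a,b,c)$, $V_2(a,b,c) = (a,ac-b,c)$, $V_3(a,b,c) = (a,b,ab-c)$. The Markoff tree $\mathcal{G}^\times$ is the graph with vertex set $\mathcal{M}^\times$ (a connected tree rooted at $(3,3,3)$) with an edge labeled $V_i$ between $v_1,v_2$ whenever $V_i(v_1) = v_2$; the graph $\mathcal{G}_p^\times$ is defined in the same way with vertex set $\mathcal{M}_p^\times$ and the involutions taken modulo $p$. *)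

(* Defs.v *)
From HB Require Import structures.
From mathcomp Require Import all_boot all_order all_algebra.
From Stdlib Require Import Relations.
Set Implicit Arguments. Unset Strict Implicit. Unset Printing Implicit Defensive.
Import Order.TTheory GRing.Theory Num.Theory.
Local Open Scope ring_scope.

Definition triple (R : Type) := (R * R * R)%type.

Definition markoff_form (R : comRingType) (t : triple R) : R :=
  let '(a, b, c) := t in a ^+ 2 + b ^+ 2 + c ^+ 2 - a * b * c.

(* Vieta involutions V_1, V_2, V_3 (indexed by i : 'I_3, i = 0,1,2) *)
Definition vieta (R : comRingType) (i : 'I_3) (t : triple R) : triple R :=
  let '(a, b, c) := t in
  match val i with
  | 0%N => (b * c - a, b, c)
  | 1%N => (a, a * c - b, c)
  | _ => (a, b, a * b - c)
  end.

Definition inM (t : triple int) : Prop :=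
  let '(a, b, c) := t in
  [/\ 0 <= a, 0 <= b, 0 <= c & markoff_form t = 0].

Definition inMx (t : triple int) : Prop := inM t /\ t <> (0, 0, 0).

Definition inMp (p : nat) (x : triple 'F_p) : Prop := markoff_form x = 0.
Definition inMpx (p : nat) (x : triple 'F_p) : Prop := inMp x /\ x <> (0, 0, 0).

Definition red (p : nat) (t : triple int) : triple 'F_p :=
  let '(a, b, c) := t in (a%:~R, b%:~R, c%:~R).

Definition edgeG (i : 'I_3) (u v : triple int) : Prop :=
  [/\ inMx u, inMx v & vieta i u = v].
Definition edgeGp (p : nat) (i : 'I_3) (x y : triple 'F_p) : Prop :=
  [/\ inMpx x, inMpx y & vieta i x = y].

Definition Gp_connected (p : nat) : Prop :=
  forall x y : triple 'F_p, inMpx x -> inMpx y ->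
    clos_refl_trans _ (fun x' y' => exists i, edgeGp i x' y') x y.

(* G_p^x coincides with G^x with triples congruent mod p identified:
   the vertices are the (nonzero) classes of reductions of vertices of G^x,
   and two classes are joined by a V_i-edge iff some representatives are. *)
Definition Gp_is_quotient (p : nat) : Prop :=
  (forall x : triple 'F_p,
     inMpx x <-> (x <> (0, 0, 0) /\ exists u, inMx u /\ red p u = x))
  /\
  (forall (i : 'I_3) (x y : triple 'F_p), inMpx x -> inMpx y ->
     (edgeGp i x y <->
      exists u v, [/\ edgeG i u v, red p u = x & red p v = y])).

(* Main.v *)
Require Import Defs.
From mathcomp Require Import all_boot all_order all_algebra.
From mathcomp Require Import zify ring lra.
From Stdlib Require Import Relations.
Set Implicit Arguments. Unset Strict Implicit.
Import Order.TTheory GRing.Theory Num.Theory.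
Local Open Scope ring_scope.

Lemma desc_max (a b c : int) : 0 <= c <= b -> b <= a ->
  a * a + b * b + c * c = a * b * c -> ~ (a = 0 /\ b = 0 /\ c = 0) -> ~ (a = 3 /\ b = 3 /\ c = 3) ->
  b * c - a < a.
Proof.
move=> /andP[c0 cb] ba E n0' n3'.
have n0 : (a, b, c) <> (0, 0, 0) by case=> *; apply: n0'.
have n3 : (a, b, c) <> (3, 3, 3) by case=> *; apply: n3'.
rewrite ltNge; apply/negP => H.
have fb : 0 <= (a - b) * ((b * c - a) - b) by apply: mulr_ge0; lia.
have fb' : b * c * b <= 2 * b * b + c * c by nia.
have [c_0|cpos] := eqVneq c 0.
  subst c. apply: n0. have : a * a + b * b = 0 by nia. 
  move=> h; have a0 : a = 0 by nia. have b0 : b = 0 by nia. by rewrite a0 b0.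
have c1 : c <> 1 by move=> c1; subst c; nia.
have c2 : c <> 2 by move=> c2; subst c; nia.
have c3 : 3 <= c by lia.
have cb3 : c = 3 /\ b = 3 by nia.
case: cb3 => c3' b3; subst b c.
have : (a - 3) * (a - 6) = 0 by nia.
move/eqP; rewrite mulf_eq0 => /orP[]; [by move/eqP=> h; apply n3; congr (_,_,_); lia| move/eqP; lia].
Qed.

Lemma descent3 (a b c : int) : 0 <= a -> 0 <= b -> 0 <= c ->
  a * a + b * b + c * c = a * b * c -> (a, b, c) <> (0, 0, 0) -> (a, b, c) <> (3, 3, 3) ->
  b * c - a < a \/ a * c - b < b \/ a * b - c < c.
Proof.
move=> a0 b0 c0 E n0 n3.
have n0' : ~ (a = 0 /\ b = 0 /\ c = 0) by move=> [ha [hb hc]]; subst.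
have n3' : ~ (a = 3 /\ b = 3 /\ c = 3) by move=> [ha [hb hc]]; subst.
have [ba|ab] := lerP b a; have [ca|ac] := lerP c a; have [cb|bc] := lerP c b.
- left; apply: desc_max => //; lia.
- left; have h : c * b - a < a by apply: desc_max; lia.
  nia.
- lia.
- right; right; have h : a * b - c < c by apply: desc_max; lia.
  nia.
- right; left; have h : a * c - b < b by apply: desc_max; lia.
  nia.
- lia.
- right; left; have h : c * a - b < b by apply: desc_max; lia.
  nia.
- right; right; have h : b * a - c < c by apply: desc_max; lia.
  nia.
Qed.

Lemma vieta_invol (R : comRingType) i (t : triple R) : vieta i (vieta i t) = t.
Proof.
case: t => [[a b] c]; case: i => [[|[|[|k]]] Hi] //=; congr (_,_,_); ring.
Qed.

Lemma vieta_form (R : comRingType) i (t : triple R) :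
  markoff_form (vieta i t) = markoff_form t.
Proof.
case: t => [[a b] c]; case: i => [[|[|[|k]]] Hi] //=; ring.
Qed.

Lemma vieta0 (R : comRingType) i : vieta i ((0, 0, 0) : triple R) = (0, 0, 0).
Proof. case: i => [[|[|[|k]]] Hi] //=; congr (_,_,_); ring. Qed.

Lemma red_vieta p i t : red p (vieta i t) = vieta i (red p t).
Proof.
case: t => [[a b] c]; case: i => [[|[|[|k]]] Hi] //=; by rewrite intrB intrM.
Qed.

Lemma red_form p t : markoff_form (red p t) = (markoff_form t)%:~R.
Proof.
case: t => [[a b] c] /=. by rewrite !intrB !intrD !intrM !expr2.
Qed.

Lemma red0 p : red p (0, 0, 0) = (0, 0, 0).
Proof. by []. Qed.

Lemma inM_vieta i t : inM t -> inM (vieta i t).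
Proof.
case: t => [[a b] c] [a0 b0 c0 E].
have E' := E; rewrite /markoff_form !expr2 in E'.
have F := vieta_form i (a, b, c).
case: i F => [[|[|[|k]]] Hi] //= F; split => //; try by rewrite F.
- have [x_0|xp] := eqVneq a 0.
    subst a; have hy : b = 0 by nia. subst b; lia.
  have h1 : (b * c - a) * a = b * b + c * c by lia.
  rewrite leNgt; apply/negP => hn.
  have : (a - b * c) * a > 0 by apply: mulr_gt0; lia.
  nia.
- have [x_0|xp] := eqVneq b 0.
    subst b; have hy : a = 0 by nia. subst a; lia.
  have h1 : (a * c - b) * b = a * a + c * c by lia.
  rewrite leNgt; apply/negP => hn.
  have : (b - a * c) * b > 0 by apply: mulr_gt0; lia.
  nia.
- have [x_0|xp] := eqVneq c 0.
    subst c; have hy : a = 0 by nia. subst a; lia.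
  have h1 : (a * b - c) * c = a * a + b * b by lia.
  rewrite leNgt; apply/negP => hn.
  have : (c - a * b) * c > 0 by apply: mulr_gt0; lia.
  nia.
Qed.

Lemma inMx_vieta i t : inMx t -> inMx (vieta i t).
Proof.
move=> [h n]; split; first exact: inM_vieta.
move=> e; apply: n; by rewrite -(vieta_invol i t) e vieta0.
Qed.

Definition sumt (t : triple int) : int := let '(a, b, c) := t in a + b + c.

Lemma descent t : inMx t -> t <> (3, 3, 3) ->
  exists i, sumt (vieta i t) < sumt t.
Proof.
case: t => [[a b] c] [[a0 b0 c0 E] n0] n3.
rewrite /markoff_form !expr2 in E.
have E' : a * a + b * b + c * c = a * b * c by lia.
case: (descent3 a0 b0 c0 E' n0 n3) => [h|[h|h]].
- by exists (@Ordinal 3 0 isT) => /=; lia.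
- by exists (@Ordinal 3 1 isT) => /=; lia.
- by exists (@Ordinal 3 2 isT) => /=; lia.
Qed.

Section Conn.
Variable p : nat.
Let E := fun x' y' : triple 'F_p => exists i, edgeGp i x' y'.
Let r := red p (3, 3, 3).

Lemma conn_main n (u : triple int) : (absz (sumt u) < n)%N -> inMx u ->
  red p u <> (0, 0, 0) ->
  clos_refl_trans _ E (red p u) r /\ clos_refl_trans _ E r (red p u).
Proof.
elim: n u => [|n IH] u // hn hu hr.
have [->|n3] := eqVneq u (3, 3, 3).
  by split; apply: rt_refl.
have n3' : u <> (3, 3, 3) by move=> e; rewrite e eqxx in n3.
have [i hi] := descent hu n3'.
have hv := inMx_vieta i hu.
have hvr : red p (vieta i u) <> (0, 0, 0).
  by rewrite red_vieta => e; apply: hr; rewrite -(vieta_invol i (red p u)) e vieta0.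
have hs : 0 <= sumt (vieta i u) by case: hv; case: (vieta i u) => [[a b] c] [] /=; lia.
have hsu : 0 <= sumt u by case: hu; case: (u) => [[a b] c] [] /=; lia.
have hlt : (absz (sumt (vieta i u)) < absz (sumt u))%N.
  by rewrite -ltz_nat !abszE !ger0_norm.
have [IH1 IH2] := IH _ ltac:(apply: leq_trans hlt _; by []) hv hvr.
have inMpx_red : forall w, inMx w -> red p w <> (0, 0, 0) -> inMpx (red p w).
  move=> w [hw _] hw'; split => //; rewrite /inMp red_form.
  by case: w hw hw' => [[a b] c] /= [_ _ _ ->].
have e1 : E (red p u) (red p (vieta i u)).
  by exists i; split; [exact: inMpx_red | exact: inMpx_red | rewrite red_vieta].
have e2 : E (red p (vieta i u)) (red p u).
  exists i; split; [exact: inMpx_red | exact: inMpx_red | ].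
  by rewrite -red_vieta vieta_invol.
split.
  by apply: rt_trans IH1; apply: rt_step.
by apply: rt_trans IH2 _; apply: rt_step.
Qed.
End Conn.

Theorem lemma2 :
  (forall p : nat, prime p -> (2 < p)%N -> Gp_connected p /\ Gp_is_quotient p)
  <->
  (forall p : nat, prime p -> (2 < p)%N ->
     forall x : triple 'F_p, inMp x -> exists t, inM t /\ red p t = x).
Proof.
have inM_red : forall p u, inM u -> inMp (red p u).
  move=> p u hu; rewrite /inMp red_form.
  by case: u hu => [[a b] c] /= [_ _ _ ->].
split.
- move=> H p pp p2 x hx.
  have [->|nx] := eqVneq x (0, 0, 0).
    by exists (0, 0, 0).
  have [_ [Hq _]] := H p pp p2.
  have nx' : x <> (0, 0, 0) by move=> e; rewrite e eqxx in nx.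
  have [_ [u [[hu _] hr]]] := (Hq x).1 (conj hx nx').
  by exists u.
- move=> H p pp p2.
  have lift : forall x, inMpx x -> exists u, inMx u /\ red p u = x.
    move=> x [hx nx]; have [t [ht e]] := H p pp p2 x hx.
    exists t; split => //; split => // et; apply: nx; by rewrite -e et.
  split.
  + move=> x y hx hy.
    have [u [hu hux]] := lift x hx.
    have [v [hv hvy]] := lift y hy.
    have [c1 _] := @conn_main p (absz (sumt u)).+1 u (leqnn _) hu
       ltac:(rewrite hux; exact: hx.2).
    have [_ c2] := @conn_main p (absz (sumt v)).+1 v (leqnn _) hv
       ltac:(rewrite hvy; exact: hy.2).
    rewrite -hux -hvy; exact: rt_trans c1 c2.
  + split.
    * move=> x; split.
        move=> hx; split; first exact: hx.2.
        by have [u [hu e]] := lift x hx; exists u.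
      move=> [nx [u [hu hr]]]; split => //.
      by rewrite -hr; apply: inM_red; case: hu.
    * move=> i x y hx hy; split.
        move=> [_ _ e].
        have [u [hu hux]] := lift x hx.
        exists u, (vieta i u); split => //.
          by split => //; exact: inMx_vieta.
        by rewrite red_vieta hux.
      move=> [u [v [[hu hv e] hux hvy]]]; split => //.
      by rewrite -hux -hvy -e red_vieta.
Qed.
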